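(* Let $n\ge 1$ and for sections $X_1,\dots,X_h$ define \[ \mu_n(X_1,\dots,X_h)=\sum_{(a_1,\dots,a_h)} \mu\big([\pi^{a_1}]_{\mathscr{F}^{\mathrm{univ}}}(X_1),\dots,[\pi^{a_h}]_{\mathscr{F}^{\mathrm{univ}}}(X_h)\big), \] the sum over integer tuples with $0\le a_i\le n-1$ and $\sum_i a_i=(h-1)(n-1)$ (so that $\mu_0$ is the empty sum $0$). Then for sections $X_1,\dots,X_h$ of $\mathscr{F}^{\mathrm{univ}}[\pi^n]$ over an $\mathcal{A}$-algebra $R$ we have \[ [\pi]_{\mathrm{LT}}(\mu_n(X_1,\dots,X_h)) = \mu_{n-1}\big([\pi]_{\mathscr{F}^{\mathrm{univ}}}(X_1),\dots,[\pi]_{\mathscr{F}^{\mathrm{univ}}}(X_h)\big). \] In particular $\mu_n(X_1,\dots,X_h)$ is a section of $\mathrm{LT}[\pi^n]$.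
   Context: $F=k((\pi))$, $k=\mathbf{F}_q$, $\mathcal{O}_F=k[[\pi]]$, $h\ge1$, $\mathcal{A}=\bar k[[\pi]][[u_1,\dots,u_{h-1}]]$. $\mathscr{F}^{\mathrm{univ}}$ over $\mathcal{A}$ has additive law, $[\zeta](X)=\zeta X$ ($\zeta\in k$), $[\pi](X)=\pi X+u_1X^q+\dots+u_{h-1}X^{q^{h-1}}+X^{q^h}$, and $[\pi^a]$ is the $a$-fold iterate. $\mathrm{LT}$ has additive law, $[\zeta](X)=\zeta X$, $[\pi](X)=\pi X+(-1)^{h-1}X^q$. A section of $G[\pi^n]$ over $R$ is an $s\in R$ with $[\pi^n]_G(s)=0$. $\mu(X_1,\dots,X_h)=\det(X_i^{q^j})_{1\le i\le h,0\le j\le h-1}$ is the Moore determinant. *)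

(* Defs.v *)
From HB Require Import structures.
From mathcomp Require Import all_boot all_order all_algebra all_field.
Set Implicit Arguments. Unset Strict Implicit. Unset Printing Implicit Defensive.
Import GRing.Theory.
Local Open Scope ring_scope.

Section LubinTate.
Variables (R : comNzRingType) (q h : nat) (pi : R) (u : 'I_h.-1 -> R).

(* [pi]_{F^univ}(X) = pi X + u_1 X^q + ... + u_{h-1} X^{q^{h-1}} + X^{q^h};
   u i stands for u_{i+1}. *)
Definition piF (X : R) : R :=
  pi * X + \sum_(i < h.-1) u i * X ^+ (q ^ i.+1) + X ^+ (q ^ h).

Definition piFn (a : nat) (X : R) : R := iter a piF X.

Definition piLT (X : R) : R := pi * X + (-1) ^+ h.-1 * X ^+ q.

Definition moore (X : 'I_h -> R) : R :=
  \det (\matrix_(i < h, j < h) X i ^+ (q ^ j)).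

Definition mu_n (n : nat) (X : 'I_h -> R) : R :=
  \sum_(a : {ffun 'I_h -> 'I_n} | (\sum_(i < h) (a i : nat))%N == ((h - 1) * (n - 1))%N)
    moore (fun i => piFn (a i) (X i)).

End LubinTate.

(* Main.v *)
Require Import Defs.
From HB Require Import structures.
From mathcomp Require Import all_boot all_order all_algebra all_field.
From mathcomp Require Import ring zify.
Import GRing.Theory.
Local Open Scope ring_scope.

Lemma frobD (R : comNzRingType) (p r : nat) (chR : p \in [pchar R]) (x y : R) :
  (x + y) ^+ (p ^ r) = x ^+ (p ^ r) + y ^+ (p ^ r).
Proof.
elim: r => [|r IH]; first by rewrite !expn0 !expr1.
by rewrite expnSr !exprM IH -!(pFrobenius_autE chR) rmorphD.
Qed.

Lemma frob_det (R : comNzRingType) (p r : nat) (chR : p \in [pchar R]) (N : nat)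
  (A : 'M[R]_N) :
  \det (map_mx (fun x => x ^+ (p ^ r)) A) = \det A ^+ (p ^ r).
Proof.
elim: r => [|r IH].
  by rewrite expn0 expr1; congr (\det _); apply/matrixP => i j; rewrite !mxE expr1.
have -> : map_mx (fun x => x ^+ (p ^ r.+1)) A =
          map_mx (pFrobenius_aut chR) (map_mx (fun x => x ^+ (p ^ r)) A).
  by apply/matrixP => i j; rewrite !mxE expnSr exprM.
by rewrite det_map_mx IH expnSr exprM.
Qed.

Lemma piLT_det (R : comNzRingType) (p r q h' : nat) (chR : p \in [pchar R])
  (Hq : q = (p ^ r)%N) (pi : R) (u : 'I_h'.+1.-1 -> R) (Y : 'I_h'.+1 -> R) :
  piLT q h'.+1 pi (\det (\matrix_(i, j) Y i ^+ (q ^ j)))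
  = \sum_k piF q pi u (Y k) * cofactor (\matrix_(i, j) Y i ^+ (q ^ j)) k ord0.
Proof.
set A := \matrix_(i, j) Y i ^+ (q ^ j).
rewrite /piLT /piF.
under eq_bigr => k _ do rewrite !mulrDl.
rewrite !big_split /=.
have E1 : \sum_k pi * Y k * cofactor A k ord0 = pi * \det A.
  rewrite (expand_det_col A ord0) mulr_sumr; apply: eq_bigr => k _.
  by rewrite /A mxE /= expn0 expr1 -mulrA.
have E2 : \sum_k (\sum_(j < h'.+1.-1) u j * Y k ^+ (q ^ j.+1)) * cofactor A k ord0 = 0.
  under eq_bigr do rewrite mulr_suml.
  rewrite exchange_big /=; apply: big1 => j _.
  have := congr1 (fun M : 'M[R]_h'.+1 => M ord0 (lift ord0 j)) (mul_adj_mx A).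
  rewrite !mxE /= mulr0n => H.
  transitivity (u j * \sum_k (\adj A) ord0 k * A k (lift ord0 j)); last by rewrite H mulr0.
  rewrite mulr_sumr; apply: eq_bigr => k _.
  rewrite [in RHS]/A !mxE /= /bump leq0n add1n -/A; ring.
rewrite E1 E2 addr0; congr (_ + _).
set B := map_mx (fun x => x ^+ q) A.
have HB : \det B = \det A ^+ q by rewrite /B Hq frob_det.
rewrite -HB (expand_det_col B ord_max) mulr_sumr; apply: eq_bigr => k _.
have Hc : col' ord_max B = col' ord0 A.
  apply/matrixP => i j; rewrite !mxE -exprM -expnSr.
  by rewrite lift_max /=.
rewrite /cofactor Hc /B mxE /=.
have -> : A k ord_max = Y k ^+ (q ^ h') by rewrite /A mxE.
rewrite -exprM -expnSr addn0.
set D := \det _.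
rewrite exprD.
have s2 : (-1) ^+ h' * (-1) ^+ h' = 1 :> R by rewrite -exprD addnn -muln2 exprM sqrr_sign.
transitivity (Y k ^+ (q ^ h'.+1) * ((-1) ^+ k * D) * ((-1) ^+ h' * (-1) ^+ h')); first ring.
by rewrite s2 mulr1.
Qed.

Lemma sum_neq n (k : 'I_n.+1) : (\sum_(i < n.+1) (i != k : nat) = n)%N.
Proof.
rewrite (bigD1 k) //= eqxx add0n.
rewrite (eq_bigr (fun _ => 1%N)); last by move=> i ->.
by rewrite sum1_card cardC1 card_ord.
Qed.

Lemma sum_eqk n (k : 'I_n.+1) (c : nat) : (\sum_(i < n.+1) (c * (i == k) : nat) = c)%N.
Proof.
rewrite (bigD1 k) //= eqxx muln1 big1 ?addn0 // => i /negbTE ->.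
by rewrite muln0.
Qed.

Lemma sum_eq1 n (k : 'I_n.+1) : (\sum_(i < n.+1) (i == k : nat) = 1)%N.
Proof. by have := @sum_eqk _ k 1%N; under eq_bigr do rewrite mul1n. Qed.

Lemma pos_others h' m (a : 'I_h'.+1 -> nat) k l :
  (forall i, a i <= m)%N -> (a k < m)%N -> (\sum_i a i = h' * m)%N -> l != k ->
  (0 < a l)%N.
Proof.
move=> Hle Hk Hs lk; apply: contraT; rewrite -eqn0Ngt => /eqP al0.
have : (\sum_i (a i + (i == k) + m * (i == l)) <= \sum_(i < h'.+1) m)%N.
  apply: leq_sum => i _; case: (eqVneq i k) => [->|ik].
    by rewrite eq_sym (negbTE lk) muln0 addn0 addn1.
  case: (eqVneq i l) => [->|il]; first by rewrite al0 /= muln1.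
  by rewrite /= !muln0 !addn0 Hle.
rewrite !big_split /= (@sum_eqk _ l m) sum_eq1 sum_nat_const card_ord Hs.
lia.
Qed.

Definition Gm (R : comNzRingType) q (pi : R) h' (u : 'I_h'.+1.-1 -> R)
  (X : 'I_h'.+1 -> R) (c : 'I_h'.+1 -> nat) : 'M[R]_h'.+1 :=
  \matrix_(i, j) (iter (c i) (piF q pi u) (X i)) ^+ (q ^ j).

Definition Tm (R : comNzRingType) q (pi : R) h' (u : 'I_h'.+1.-1 -> R)
  (X : 'I_h'.+1 -> R) (k : 'I_h'.+1) (c : 'I_h'.+1 -> nat) : R :=
  iter (c k) (piF q pi u) (X k) * cofactor (@Gm R q pi h' u X c) k ord0.

Arguments Gm {R} q pi {h'} u X c.
Arguments Tm {R} q pi {h'} u X k c.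

Lemma Tm_ext (R : comNzRingType) q (pi : R) h' (u : 'I_h'.+1.-1 -> R) X k c c' :
  c =1 c' -> Tm q pi u X k c = Tm q pi u X k c'.
Proof.
move=> E; rewrite /Tm E; congr (_ * cofactor _ _ _).
by apply/matrixP => i j; rewrite !mxE E.
Qed.

Lemma cof_indep (R : comNzRingType) q (pi : R) h' (u : 'I_h'.+1.-1 -> R) X k c c' :
  (forall i, i != k -> c i = c' i) ->
  cofactor (Gm q pi u X c) k ord0 = cofactor (Gm q pi u X c') k ord0.
Proof.
move=> E; rewrite /cofactor; congr (_ * \det _).
apply/matrixP => i j; rewrite !mxE E //.
by rewrite eq_sym neq_lift.
Qed.

Lemma det_Gm (R : comNzRingType) q (pi : R) h' (u : 'I_h'.+1.-1 -> R) X c :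
  \det (Gm q pi u X c) = \sum_k Tm q pi u X k c.
Proof.
rewrite (expand_det_col _ ord0); apply: eq_bigr => k _.
by rewrite /Tm [X in X * _]mxE /= expn0 expr1.
Qed.

Lemma piLT_add (R : comNzRingType) p r q h (chR : p \in [pchar R])
  (Hq : q = (p ^ r)%N) (pi x y : R) :
  piLT q h pi (x + y) = piLT q h pi x + piLT q h pi y.
Proof. by rewrite /piLT Hq frobD // mulrDr mulrDr addrACA. Qed.

Lemma piLT0 (R : comNzRingType) p r q h (pp : prime p)
  (Hq : q = (p ^ r)%N) (pi : R) : piLT q h pi 0 = 0.
Proof.
by rewrite /piLT mulr0 expr0n Hq expn_eq0 -[p == 0%N]negbK -lt0n prime_gt0 /= ?mulr0 ?addr0.
Qed.

Lemma step (R : comNzRingType) p r q h' m (chR : p \in [pchar R]) (pp : prime p)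
  (Hq : q = (p ^ r)%N) (pi : R) (u : 'I_h'.+1.-1 -> R) (X : 'I_h'.+1 -> R) :
  (forall i, piFn q pi u m.+1 (X i) = 0) ->
  piLT q h'.+1 pi (mu_n q pi u m.+1 X) = mu_n q pi u m (fun i => piF q pi u (X i)).
Proof.
move=> HX; rewrite /mu_n.
rewrite (big_morph _ (@piLT_add R p r q h'.+1 chR Hq pi) (@piLT0 R p r q h'.+1 pp Hq pi)).
have L : forall a : {ffun 'I_h'.+1 -> 'I_m.+1},
    piLT q h'.+1 pi (moore q (fun i => piFn q pi u (a i) (X i)))
    = \sum_k Tm q pi u X k (fun i => (a i + (i == k))%N).
  move=> a; rewrite /moore (@piLT_det R p r q h' chR Hq pi u); apply: eq_bigr => k _.
  rewrite /Tm eqxx addn1 /=; congr (_ * _).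
  rewrite -(@cof_indep _ _ _ _ _ _ _ (fun i => nat_of_ord (a i))) //.
  by move=> i /negbTE ->; rewrite addn0.
have Rr : forall b : {ffun 'I_h'.+1 -> 'I_m},
    moore q (fun i => piFn q pi u (b i) (piF q pi u (X i)))
    = \sum_k Tm q pi u X k (fun i => (b i).+1).
  move=> b; rewrite -det_Gm /moore; congr (\det _).
  by apply/matrixP => i j; rewrite !mxE /piFn -iterSr.
under eq_bigr do rewrite L.
under [RHS]eq_bigr do rewrite Rr.
rewrite exchange_big [RHS]exchange_big /=; apply: eq_bigr => k _.
clear L Rr.
case: m HX => [|m'] HX.
  rewrite [RHS]big1; last by move=> b _; case: (b ord0).
  apply: big1 => a _; rewrite /Tm.
  have -> : (a k : nat) = 0%N by case: (a k) => [[]].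
  rewrite eqxx add0n; have := HX k; rewrite /piFn => ->; exact: mul0r.
have E1 : ((h'.+1 - 1) * (m'.+2 - 1) = h' * m'.+1)%N by rewrite !subn1.
have E2 : ((h'.+1 - 1) * (m'.+1 - 1) = h' * m')%N by rewrite !subn1.
rewrite E1 E2.
rewrite (bigID (fun a : {ffun _ -> 'I_m'.+2} => (a k < m'.+1)%N)) /=.
rewrite [X in _ + X = _]big1 ?addr0; last first.
  move=> a /andP[_]; rewrite -leqNgt => Hak.
  have Eak : (a k : nat) = m'.+1 by apply/eqP; rewrite eqn_leq Hak -ltnS ltn_ord.
  rewrite /Tm eqxx Eak addn1; have := HX k; rewrite /piFn => ->; exact: mul0r.
pose hb := fun b : {ffun 'I_h'.+1 -> 'I_m'.+1} =>
  [ffun i => if i == k then widen_ord (leqnSn _) (b i) else lift ord0 (b i)]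
  : {ffun 'I_h'.+1 -> 'I_m'.+2}.
pose ha := fun a : {ffun 'I_h'.+1 -> 'I_m'.+2} =>
  [ffun i => (inord (a i - (i != k)) : 'I_m'.+1)].
have hbE : forall b i, (hb b i : nat) = (b i + (i != k))%N.
  move=> b i; rewrite ffunE; case: (eqVneq i k) => [->|_] /=.
    by rewrite addn0.
  by rewrite /bump leq0n add1n addn1.
have sum_hb : forall b, (\sum_i (hb b i : nat) = \sum_i b i + h')%N.
  move=> b; rewrite (eq_bigr _ (fun i _ => hbE b i)).
  by rewrite big_split /= sum_neq.
have haK : forall b, ha (hb b) = b.
  move=> b; apply/ffunP => i; apply/val_inj; rewrite ffunE /= hbE addnK inordK //.
have hbK : forall a : {ffun 'I_h'.+1 -> 'I_m'.+2}, ((\sum_i (a i : nat) == h' * m'.+1)%N && (a k < m'.+1)%N) ->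
    hb (ha a) = a.
  move=> a /andP[/eqP Hs Hk]; apply/ffunP => i; apply/val_inj.
  rewrite /= hbE ffunE inordK; last first.
    case: (eqVneq i k) => [->|_] /=; first by rewrite subn0.
    by have := ltn_ord (a i); lia.
  rewrite subnK //; case: (eqVneq i k) => [_|ik] //=.
  apply: (@pos_others h' m'.+1 (fun i => nat_of_ord (a i)) k) => //.
  by move=> j; rewrite -ltnS ltn_ord.
rewrite (reindex_onto hb ha hbK).
apply: eq_big => [b | b _].
  rewrite haK eqxx andbT sum_hb hbE eqxx addn0 ltn_ord andbT mulnS (addnC h').
  by rewrite eqn_add2r.
apply: Tm_ext => i; rewrite hbE.
by case: (eqVneq i k) => [->|_]; rewrite /= ?addn0 ?addn1.
Qed.

Lemma mu0 (R : comNzRingType) q (pi : R) h' (u : 'I_h'.+1.-1 -> R) (X : 'I_h'.+1 -> R) :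
  mu_n q pi u 0 X = 0.
Proof. by apply: big1 => b _; case: (b ord0). Qed.

Lemma iter_zero (R : comNzRingType) p r q h' (chR : p \in [pchar R]) (pp : prime p)
  (Hq : q = (p ^ r)%N) (pi : R) (u : 'I_h'.+1.-1 -> R) m :
  forall X : 'I_h'.+1 -> R, (forall i, piFn q pi u m.+1 (X i) = 0) ->
  iter m.+1 (piLT q h'.+1 pi) (mu_n q pi u m.+1 X) = 0.
Proof.
elim: m => [|m IH] X HX.
  by rewrite /= (@step R p r q h' 0 chR pp Hq pi u) // mu0.
rewrite iterSr (@step R p r q h' m.+1 chR pp Hq pi u) // IH // => i.
by have := HX i; rewrite /piFn -iterSr.
Qed.

Theorem proposition3p7
  (K : closedFieldType) (R : comAlgType K) (p r q h n : nat)
  (pi : R) (u : 'I_h.-1 -> R) (X : 'I_h -> R) :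
  prime p -> p \in [pchar K] -> (0 < r)%N -> q = (p ^ r)%N ->
  (1 <= h)%N -> (1 <= n)%N ->
  (forall i, piFn q pi u n (X i) = 0) ->
  piLT q h pi (mu_n q pi u n X) = mu_n q pi u n.-1 (fun i => piF q pi u (X i))
  /\ iter n (piLT q h pi) (mu_n q pi u n X) = 0.
Proof.
move=> pp chK _ Hq.
have chR : p \in [pchar R] by rewrite (pchar_lalg R).
case: h u X => [//|h'] u X _.
case: n => [//|m] _ HX.
split; first exact: (@step R p r q h' m chR pp Hq pi u).
exact: (@iter_zero R p r q h' chR pp Hq pi u m).
Qed.
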